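(* Let $H$ be a complex Hilbert space, $\varphi,\psi:[0,1]\to\mathbb{R}$ continuous, and $A\in\mathbb{B}(H)$. Then the functions $t\mapsto\omega_t(\varphi,\psi;A)$ and $t\mapsto c_t(\varphi,\psi;A)$ are continuous on $[0,1]$.
   Context: $S_1(H)$ is the unit sphere of $H$; $\omega_t(\varphi,\psi;A)=\sup_{x\in S_1(H)}|\langle(\varphi(t)A+\psi(t)A^* )x,x\rangle|$ and $c_t(\varphi,\psi;A)=\inf_{x\in S_1(H)}|\langle(\varphi(t)A+\psi(t)A^* )x,x\rangle|$. *)

(* Defs.v *)
From HB Require Import structures.
From mathcomp Require Import all_boot all_order all_algebra.
From mathcomp Require Import all_classical all_reals all_analysis.
From mathcomp Require Import complex.
Set Implicit Arguments. Unset Strict Implicit. Unset Printing Implicit Defensive.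
Import Order.TTheory GRing.Theory Num.Theory.
Local Open Scope ring_scope.
Local Open Scope classical_set_scope.
Local Open Scope complex_scope.

Definition is_inner_product (R : realType) (V : lmodType R[i])
    (ip : V -> V -> R[i]) : Prop :=
  [/\ (forall (a : R[i]) (x y z : V), ip (a *: x + y) z = a * ip x z + ip y z),
      (forall x y : V, ip y x = (ip x y)^*),
      (forall x : V, 0 <= ip x x) &
      (forall x : V, ip x x = 0 -> x = 0)].

Definition ipnorm (R : realType) (V : lmodType R[i]) (ip : V -> V -> R[i])
    (x : V) : R := Num.sqrt (complex.Re (ip x x)).

Definition ip_complete (R : realType) (V : lmodType R[i])
    (ip : V -> V -> R[i]) : Prop :=
  forall u : nat -> V,
    (forall e : R, 0 < e -> exists N : nat, forall m n : nat,
        (N <= m)%N -> (N <= n)%N -> ipnorm ip (u m - u n) < e) ->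
    exists l : V, forall e : R, 0 < e -> exists N : nat, forall n : nat,
        (N <= n)%N -> ipnorm ip (u n - l) < e.

Definition is_hilbert (R : realType) (V : lmodType R[i])
    (ip : V -> V -> R[i]) : Prop :=
  is_inner_product ip /\ ip_complete ip.

Definition bounded_op (R : realType) (V : lmodType R[i])
    (ip : V -> V -> R[i]) (A : V -> V) : Prop :=
  linear A /\ exists M : R, forall x : V, ipnorm ip (A x) <= M * ipnorm ip x.

Definition is_adjoint (R : realType) (V : lmodType R[i])
    (ip : V -> V -> R[i]) (A Ad : V -> V) : Prop :=
  forall x y : V, ip (A x) y = ip x (Ad y).

Definition unit_sphere (R : realType) (V : lmodType R[i])
    (ip : V -> V -> R[i]) : set V := [set x | ipnorm ip x = 1].

Definition num_vals (R : realType) (V : lmodType R[i]) (ip : V -> V -> R[i])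
    (phi psi : R -> R) (A Ad : V -> V) (t : R) : set R :=
  [set complex.Re `|ip ((phi t)%:C *: A x + (psi t)%:C *: Ad x) x| |
     x in unit_sphere ip].

Definition omega_t (R : realType) (V : lmodType R[i]) (ip : V -> V -> R[i])
    (phi psi : R -> R) (A Ad : V -> V) (t : R) : R :=
  sup (num_vals ip phi psi A Ad t).

Definition c_t (R : realType) (V : lmodType R[i]) (ip : V -> V -> R[i])
    (phi psi : R -> R) (A Ad : V -> V) (t : R) : R :=
  inf (num_vals ip phi psi A Ad t).

(* Main.v *)
Require Import Defs.
From HB Require Import structures.
From mathcomp Require Import all_boot all_order all_algebra.
From mathcomp Require Import all_classical all_reals all_analysis.
From mathcomp Require Import complex.
From mathcomp Require Import ring lra.
Import Order.TTheory GRing.Theory Num.Theory.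
Import numFieldNormedType.Exports.
Local Open Scope ring_scope.
Local Open Scope classical_set_scope.

Section IP.
Variables (R : realType) (V : lmodType R[i]) (ip : V -> V -> R[i]).
Hypothesis hip : is_inner_product ip.
Local Open Scope complex_scope.

Lemma ip0l z : ip 0 z = 0.
Proof.
case: hip => L _ _ _.
have := L (-1) z z z; rewrite scaleN1r addNr => ->.
by rewrite mulN1r addNr.
Qed.

Lemma ipDl x y z : ip (x + y) z = ip x z + ip y z.
Proof. case: hip => L _ _ _; by rewrite -{1}[x]scale1r L mul1r. Qed.

Lemma ipZl a x z : ip (a *: x) z = a * ip x z.
Proof. case: hip => L _ _ _; by rewrite -[a *: x]addr0 L ip0l addr0. Qed.

Lemma ipDr x y z : ip z (x + y) = ip z x + ip z y.
Proof.
case: hip => L S _ _.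
rewrite S ipDl (S x z) (S y z); exact: rmorphD.
Qed.

Lemma ipZr a x z : ip z (a *: x) = (a^*)%C * ip z x.
Proof.
case: hip => L S _ _.
rewrite S ipZl (S x z); exact: rmorphM.
Qed.

Lemma ipself_real x : ip x x = (ipnorm ip x ^+ 2)%:C.
Proof.
case: hip => _ _ P _.
have := P x; rewrite lecE => /andP[/eqP hi hr].
rewrite /ipnorm sqr_sqrtr //; move: hi hr; case: (ip x x) => a b /= -> _.
by [].
Qed.

Lemma ipunit x : ipnorm ip x = 1 -> ip x x = 1.
Proof. by move=> h; rewrite ipself_real h expr1n. Qed.

Lemma cs_unit x y : ipnorm ip x = 1 -> `|ip y x| ^+ 2 <= ip y y.
Proof.
move=> /ipunit hx.
case: (hip) => _ S P _.
set c := ip y x.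
have := P (y - c *: x).
rewrite -scaleNr ipDl ipZl !ipDr !ipZr hx.
have -> : ip x y = c^*%C by rewrite S.
have -> : ip y x = c by [].
rewrite sqr_normc.
have hN : (- c)^*%C = - c^*%C by exact: rmorphN.
rewrite hN => h; rewrite -subr_ge0.
suff <- : ip y y + - c^*%C * c + - c * (c^*%C + - c^*%C * 1) = ip y y - c * c^*%C by [].
ring.
Qed.
Lemma normC_real (r : R) : `|r%:C| = `|r|%:C.
Proof. by rewrite normc_def /= expr0n /= addr0 sqrtr_sqr. Qed.

Lemma bound_unit (B : V -> V) (M : R) x :
  ipnorm ip x = 1 -> ipnorm ip (B x) <= M * ipnorm ip x -> `|ip (B x) x| <= M%:C.
Proof.
move=> hx hB; rewrite hx mulr1 in hB.
have n0 : 0 <= ipnorm ip (B x) by rewrite /ipnorm sqrtr_ge0.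
have M0 : 0 <= M by apply: le_trans hB.
have h1 := @cs_unit x (B x) hx.
rewrite ipself_real in h1.
have h2 : (ipnorm ip (B x) ^+ 2)%:C <= (M ^+ 2)%:C.
  by rewrite lecR ler_sqr ?nnegrE.
have h3 := le_trans h1 h2.
have e : (M ^+ 2)%:C = M%:C ^+ 2 by rewrite rmorphXn.
rewrite e in h3.
by rewrite -ler_sqr ?nnegrE // ler0c.
Qed.
Lemma val_eq (A Ad : V -> V) (p q : R) x : is_adjoint ip A Ad ->
  ip (p%:C *: A x + q%:C *: Ad x) x = p%:C * ip (A x) x + q%:C * (ip (A x) x)^*%C.
Proof.
move=> adj; case: (hip) => _ S _ _.
by rewrite ipDl !ipZl (S x (Ad x)) adj.
Qed.
End IP.

Section Diff.
Variable R : realType.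
Local Open Scope complex_scope.

Lemma normC_real' (r : R) : `|r%:C| = `|r|%:C.
Proof. by rewrite normc_def /= expr0n /= addr0 sqrtr_sqr. Qed.

Lemma diff_bound (p1 q1 p2 q2 M : R) (a : R[i]) : `|a| <= M%:C ->
  complex.Re `|p1%:C * a + q1%:C * a^*| <=
  complex.Re `|p2%:C * a + q2%:C * a^*| + (`|p1 - p2| + `|q1 - q2|) * M.
Proof.
move=> ha.
set u := _ + _; set v := p2%:C * a + _.
have h : `|u| <= `|v| + ((`|p1-p2| + `|q1-q2|) * M)%:C.
  rewrite -lerBlDl; apply: le_trans (lerB_dist _ _) _.
  have -> : u - v = (p1-p2)%:C * a + (q1-q2)%:C * a^*.
    rewrite /u /v !rmorphB /=. ring.
  apply: le_trans (ler_normD _ _) _.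
  rewrite !normrM normcJ !normC_real' rmorphM rmorphD /= -mulrDl.
  by apply: ler_wpM2l => //; rewrite -rmorphD /= ler0c addr_ge0.
move: h; rewrite lecE => /andP[_].
by case: `|v|.
Qed.
End Diff.
Section SupInf.
Variable R : realType.

Lemma sup_inf_one (T : Type) (U : set T) (f g : T -> R) (d B : R) :
  U !=set0 -> (forall x, U x -> 0 <= f x) ->
  (forall x, U x -> 0 <= g x) -> (forall x, U x -> g x <= B) ->
  (forall x, U x -> f x <= g x + d) ->
  sup (f @` U) <= sup (g @` U) + d /\ inf (f @` U) <= inf (g @` U) + d.
Proof.
move=> [x0 Ux0] f0 g0 gB fg; split.
- apply: ge_sup; first by exists (f x0), x0.
  move=> _ [x Ux <-]; apply: le_trans (fg _ Ux) _; rewrite lerD2r.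
  apply: ub_le_sup; last by exists x.
  by exists B => _ [y Uy <-]; exact: gB.
- rewrite -lerBlDr; apply: lb_le_inf; first by exists (g x0), x0.
  move=> _ [x Ux <-]; rewrite lerBlDr; apply: le_trans _ (fg _ Ux).
  apply: ge_inf; last by exists x.
  by exists 0 => _ [y Uy <-]; exact: f0.
Qed.

Lemma sup_inf_close (T : Type) (U : set T) (f g : T -> R) (d Bf Bg : R) :
  0 <= d ->
  (forall x, U x -> 0 <= f x) -> (forall x, U x -> 0 <= g x) ->
  (forall x, U x -> f x <= Bf) -> (forall x, U x -> g x <= Bg) ->
  (forall x, U x -> f x <= g x + d) -> (forall x, U x -> g x <= f x + d) ->
  `|sup (f @` U) - sup (g @` U)| <= d /\ `|inf (f @` U) - inf (g @` U)| <= d.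
Proof.
move=> d0 f0 g0 fB gB fg gf.
have [->|ne] := eqVneq U set0.
  by rewrite !image_set0 sup0 inf0 subrr normr0.
have ne' : U !=set0 by apply/set0P.
have [h1 h2] := @sup_inf_one _ _ _ _ _ _ ne' f0 g0 gB fg.
have [h3 h4] := @sup_inf_one _ _ _ _ _ _ ne' g0 f0 fB gf.
rewrite !ler_norml; split; apply/andP; split; lra.
Qed.
End SupInf.

Section DL.
Local Open Scope complex_scope.
Lemma dist_lemma (R : realType) (V : lmodType R[i]) (ip : V -> V -> R[i])
    (phi psi : R -> R) (A Ad : V -> V) :
  is_hilbert ip -> bounded_op ip A -> is_adjoint ip A Ad ->
  exists M : R, 0 <= M /\ forall t s,
   `|omega_t ip phi psi A Ad t - omega_t ip phi psi A Ad s|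
      <= (`|phi t - phi s| + `|psi t - psi s|) * M /\
   `|c_t ip phi psi A Ad t - c_t ip phi psi A Ad s|
      <= (`|phi t - phi s| + `|psi t - psi s|) * M.
Proof.
move=> [hip _] [_ [M hM]] adj.
exists `|M|; split => // t s.
have hM' x : ipnorm ip (A x) <= `|M| * ipnorm ip x.
  apply: le_trans (hM x) _; apply: ler_wpM2r; first by rewrite /ipnorm sqrtr_ge0.
  exact: ler_norm.
pose g r x := complex.Re `|ip ((phi r)%:C *: A x + (psi r)%:C *: Ad x) x|.
have gE r x : g r x = complex.Re `|(phi r)%:C * ip (A x) x + (psi r)%:C * (ip (A x) x)^*%C|.
  by rewrite /g (@val_eq _ _ _ hip _ _ _ _ _ adj).
have ha x : unit_sphere ip x -> `|ip (A x) x| <= `|M|%:C.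
  by move=> hx; apply: (@bound_unit _ _ _ hip) => //; rewrite hx.
have g0 r x : 0 <= g r x.
  by have := normr_ge0 (ip ((phi r)%:C *: A x + (psi r)%:C *: Ad x) x); rewrite lecE => /andP[_].
have gB r x : unit_sphere ip x -> g r x <= (`|phi r| + `|psi r|) * `|M|.
  move=> hx; have := @diff_bound _ (phi r) (psi r) 0 0 _ _ (ha x hx).
  have e0 : (0:R)%:C = 0 by [].
  rewrite gE e0 !mul0r addr0 normr0 !subr0 => h; apply: le_trans h _.
  by rewrite le_eqVlt; apply/orP; left; apply/eqP; rewrite add0r.
have gd t' s' x : unit_sphere ip x -> g t' x <= g s' x + (`|phi t' - phi s'| + `|psi t' - psi s'|) * `|M|.
  move=> hx; rewrite !gE; exact: (@diff_bound _ _ _ _ _ _ _ (ha x hx)).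
have d0 : 0 <= (`|phi t - phi s| + `|psi t - psi s|) * `|M|.
  by rewrite mulr_ge0 // addr_ge0.
have gd' : forall x, unit_sphere ip x -> g s x <= g t x + (`|phi t - phi s| + `|psi t - psi s|) * `|M|.
  by move=> x hx; rewrite (distrC (phi t)) (distrC (psi t)); exact: gd.
have [h1 h2] := @sup_inf_close R V (unit_sphere ip) (g t) (g s) _ _ _ d0
  (fun x _ => g0 t x) (fun x _ => g0 s x) (gB t) (gB s) (gd t s) gd'.
by split.
Qed.
End DL.


Lemma cont_of_lip (R : realType) (F phi psi : R -> R) (M : R) : 0 <= M ->
  (forall t s, `|F t - F s| <= (`|phi t - phi s| + `|psi t - psi s|) * M) ->
  {within `[0, 1], continuous phi} ->
  {within `[0, 1], continuous psi} ->
  {within `[0, 1], continuous F}.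
Proof.
move=> M0 hF hphi hpsi x.
have /cvgrPdist_le hp := hphi x.
have /cvgrPdist_le hq := hpsi x.
apply/cvgrPdist_le => e e0.
have e'0 : 0 < e / (2 * (M + 1)) by rewrite divr_gt0 // mulr_gt0 // ltr_wpDl.
have hp' := hp _ e'0; have hq' := hq _ e'0.
near=> t.
apply: le_trans (hF x t) _.
have h1 : `|phi x - phi t| <= e / (2 * (M + 1)) by near: t.
have h2 : `|psi x - psi t| <= e / (2 * (M + 1)) by near: t.
set k := e / (2 * (M + 1)) in h1 h2 e'0 *.
have ek : e = k * (2 * (M + 1)) by rewrite /k divfK // mulf_neq0 // gt_eqF // ltr_wpDl.
rewrite ek.
have : (`|phi x - phi t| + `|psi x - psi t|) * M <= (k + k) * M by apply: ler_wpM2r => //; exact: lerD.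
nra.
Unshelve. all: by end_near.
Qed.

Theorem theorem2p7 (R : realType) (V : lmodType R[i]) (ip : V -> V -> R[i])
    (phi psi : R -> R) (A Ad : V -> V) :
  is_hilbert ip ->
  {within `[0, 1], continuous phi} ->
  {within `[0, 1], continuous psi} ->
  bounded_op ip A ->
  is_adjoint ip A Ad ->
  {within `[0, 1], continuous (omega_t ip phi psi A Ad)} /\
  {within `[0, 1], continuous (c_t ip phi psi A Ad)}.
Proof.
move=> hH hphi hpsi hA adj.
have [M [M0 hM]] := @dist_lemma R V ip phi psi A Ad hH hA adj.
split; apply: (@cont_of_lip R _ phi psi M M0) hphi hpsi => t s; by case: (hM t s).
Qed.
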